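(* Suppose that for each $j=0,\dots,n$ the kernel $K_j$ belongs to $\mathrm{C}^2(0,2\pi)$ with $K_j''<0$ on $(0,2\pi)$. Let $S=S_\sigma$ be a simplex and let $\mathbf{y}\in S$ be such that $z_j(\mathbf{y})$ lies in the interior of $I_j(\mathbf{y})$ for each $j=0,\dots,n$. Then the Jacobian matrix of the map \[\Delta_\sigma(\mathbf{y})=\big(m_{\sigma(1)}(\mathbf{y})-m_{\sigma(0)}(\mathbf{y}),\dots,m_{\sigma(n)}(\mathbf{y})-m_{\sigma(n-1)}(\mathbf{y})\big)^\top\] at $\mathbf{y}$ is non-singular.
   Context: Identify the torus $\mathbb{T}=\mathbb{R}/2\pi\mathbb{Z}$ with $[0,2\pi)$. The kernels $K_j$ are $2\pi$-periodic functions $\mathbb{R}\to[-\infty,\infty)$, real-valued and concave on $(0,2\pi)$, with $\lim_{t\downarrow0}K_j(t)=\lim_{t\uparrow2\pi}K_j(t)$ existing in $[-\infty,\infty)$. For $\mathbf{y}\in\mathbb{T}^n$ put $y_0=0$, $y_{n+1}=2\pi$, $F(\mathbf{y},t)=K_0(t)+\sum_{j=1}^nK_j(t-y_j)$. For a permutation $\sigma$ of $\{1,\dots,n\}$ ($\sigma(0)=0,\sigma(n+1)=n+1$), $S_\sigma=\{\mathbf{y}:0<y_{\sigma(1)}<\dots<y_{\sigma(n)}<2\pi\}$; for $\mathbf{y}\in S_\sigma$, $I_{\sigma(k)}(\mathbf{y})=[y_{\sigma(k)},y_{\sigma(k+1)}]$, $m_{\sigma(k)}(\mathbf{y})=\sup_{t\in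 I_{\sigma(k)}(\mathbf{y})}F(\mathbf{y},t)$, and $z_{\sigma(k)}(\mathbf{y})$ is the unique point of $I_{\sigma(k)}(\mathbf{y})$ where $F(\mathbf{y},\cdot)$ attains this maximum. Under the hypotheses, each $m_j$ is continuously differentiable on $S_\sigma$, so the Jacobian makes sense. *)

(* Defs.v *)
From HB Require Import structures.
From mathcomp Require Import all_boot all_order all_algebra all_fingroup.
From mathcomp Require Import all_classical all_reals all_analysis.
Set Implicit Arguments. Unset Strict Implicit. Unset Printing Implicit Defensive.
Import Order.TTheory GRing.Theory Num.Theory.
Import numFieldNormedType.Exports.
Local Open Scope classical_set_scope.
Local Open Scope ring_scope.

Section Defs.
Context {R : realType}.

Definition torus_kernel (K : R -> \bar R) : Prop :=
  [/\ (forall t, K (t + 2 * pi) = K t),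
      (forall t, K t != +oo%E),
      (forall t, 0 < t < 2 * pi -> K t \is a fin_num),
      (forall x y l, 0 < x < 2 * pi -> 0 < y < 2 * pi -> 0 <= l <= 1 ->
         l * fine (K x) + (1 - l) * fine (K y) <= fine (K (l * x + (1 - l) * y))) &
      (exists L : \bar R, L != +oo%E /\
         (K t @[t --> 0^'+] --> L) /\ (K t @[t --> (2 * pi)^'-] --> L))].

Definition C2_strictly_concave (K : R -> \bar R) : Prop :=
  let k := fun t => fine (K t) in
  forall t, 0 < t < 2 * pi ->
    [/\ derivable k t 1, derivable (derive1 k) t 1,
        {for t, continuous (derive1 (derive1 k))} & derive1 (derive1 k) t < 0].

Variable n : nat.

(* y_j for j = 0..n+1, with y_0 = 0 and y_{n+1} = 2pi; y_j = y ord0 (j-1) else *)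
Definition ypos (y : 'rV[R]_n) (j : nat) : R :=
  if j is k.+1 then (if (insub k : option 'I_n) is Some i then y ord0 i else 2 * pi)
  else 0.

(* the extension of a permutation of {1..n} (given as s : 'S_n acting on
   {0..n-1}, shifted by one) with sigma(0) = 0 and sigma(n+1) = n+1 *)
Definition sext (s : 'S_n) (k : nat) : nat :=
  if k is k'.+1 then (if (insub k' : option 'I_n) is Some i then (s i).+1 else n.+1)
  else 0.

Definition Fsum (K : 'I_n.+1 -> R -> \bar R) (y : 'rV[R]_n) (t : R) : \bar R :=
  (K ord0 t + \sum_(i < n) K (lift ord0 i) (t - y ord0 i)%R)%E.

Definition in_simplex (s : 'S_n) (y : 'rV[R]_n) : Prop :=
  forall k, (k <= n)%N -> ypos y (sext s k) < ypos y (sext s k.+1).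

(* endpoints of I_{sigma(k)}(y) = [y_{sigma(k)}, y_{sigma(k+1)}] *)
Definition Ileft (s : 'S_n) (y : 'rV[R]_n) (k : nat) : R := ypos y (sext s k).
Definition Iright (s : 'S_n) (y : 'rV[R]_n) (k : nat) : R := ypos y (sext s k.+1).

Definition msupE (K : 'I_n.+1 -> R -> \bar R) (s : 'S_n) (y : 'rV[R]_n)
    (k : nat) : \bar R :=
  ereal_sup (Fsum K y @` `[Ileft s y k, Iright s y k]).

Definition Delta (K : 'I_n.+1 -> R -> \bar R) (s : 'S_n) (y : 'rV[R]_n) : 'rV[R]_n :=
  \row_(i < n) (fine (msupE K s y i.+1) - fine (msupE K s y i)).

End Defs.

(* Main.v *)
Require Import Defs.
From HB Require Import structures.
From mathcomp Require Import all_boot all_order all_algebra all_fingroup.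
From mathcomp Require Import all_classical all_reals all_analysis.
From mathcomp Require Import ring lra.
Import Order.TTheory GRing.Theory Num.Theory.
Import numFieldNormedType.Exports.
Local Open Scope classical_set_scope.
Local Open Scope ring_scope.

Section Kern.
Context {R : realType}.
Variable K : R -> \bar R.
Hypothesis hK : torus_kernel K.
Hypothesis hC : C2_strictly_concave K.
Definition kk := fun t => fine (K t).

Lemma Kper (u : R) : K (u + 2 * pi) = K u.
Proof. by case: hK. Qed.

Lemma KperN (u : R) : K (u - 2 * pi) = K u.
Proof. by rewrite -[in RHS](subrK (2 * pi) u) Kper. Qed.

Lemma Kfin (w : R) : 0 < w < 2 * pi -> K w = (kk w)%:E.
Proof. case: hK => _ _ hf _ _ hw; rewrite /kk fineK //; exact: hf. Qed.

Lemma kd1 (w : R) : 0 < w < 2 * pi -> derivable kk w 1.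
Proof. move=> hw; have [h _ _ _] := hC w hw; exact: h. Qed.

Lemma kd2 (w : R) : 0 < w < 2 * pi -> derivable (derive1 kk) w 1.
Proof. move=> hw; have [_ h _ _] := hC w hw; exact: h. Qed.

Lemma kdd (w : R) : 0 < w < 2 * pi -> (derive1 (derive1 kk)) w < 0.
Proof. move=> hw; have [_ _ _ h] := hC w hw; exact: h. Qed.

Lemma kd_dec (a b : R) : 0 < a -> a < b -> b < 2 * pi -> (derive1 kk) b < (derive1 kk) a.
Proof.
move=> a0 ab b2.
have inr (x : R) : x \in `[a, b] -> 0 < x < 2 * pi.
  by rewrite in_itv /= => /andP[h1 h2]; apply/andP; split; lra.
have [c cab E] : exists2 c, c \in `]a, b[ & (derive1 kk) b - (derive1 kk) a = (derive1 (derive1 kk)) c * (b - a).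
  apply: MVT => //.
    move=> x xin; have xr : 0 < x < 2 * pi.
      by apply: inr; move: xin; rewrite !in_itv /= => /andP[h1 h2]; rewrite !ltW.
    by rewrite derive1E; apply: derivableP; apply: kd2 x xr.
  apply: derivable_within_continuous => x /inr; exact: kd2 x.
have cr : 0 < c < 2 * pi.
  by apply: inr; move: cab; rewrite !in_itv /= => /andP[h1 h2]; rewrite !ltW.
have h := kdd c cr; rewrite -subr_lt0 E.
by rewrite nmulr_rlt0 ?subr_gt0.
Qed.

Lemma kd_le (a b : R) : 0 < a -> a <= b -> b < 2 * pi -> (derive1 kk) b <= (derive1 kk) a.
Proof.
move=> a0; rewrite le_eqVlt => /orP[/eqP->|ab] b2 //.
by rewrite ltW // kd_dec.
Qed.

Lemma ktangent (u w : R) : 0 < u < 2 * pi -> 0 < w < 2 * pi ->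
  kk u <= kk w + (derive1 kk) w * (u - w).
Proof.
move=> /andP[u0 u2] /andP[w0 w2].
have mvt (a b : R) : 0 < a -> a < b -> b < 2 * pi ->
    exists2 c, c \in `]a, b[ & kk b - kk a = (derive1 kk) c * (b - a).
  move=> a0 ab b2.
  have inr (x : R) : x \in `[a, b] -> 0 < x < 2 * pi.
    by rewrite in_itv /= => /andP[h1 h2]; apply/andP; split; lra.
  apply: MVT => //.
    move=> x xin; have xr : 0 < x < 2 * pi.
      by apply: inr; move: xin; rewrite !in_itv /= => /andP[h1 h2]; rewrite !ltW.
    by rewrite derive1E; apply: derivableP; apply: kd1 x xr.
  apply: derivable_within_continuous => x /inr; exact: kd1 x.
case: (ltgtP u w) => [uw|wu|->]; last by rewrite subrr mulr0 addr0.
- have [c cin E] := mvt u w u0 uw w2.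
  move: cin; rewrite in_itv /= => /andP[c1 c2].
  have : (derive1 kk) w <= (derive1 kk) c by apply: kd_le; lra.
  move=> h.
  have : (derive1 kk) w * (w - u) <= (derive1 kk) c * (w - u) by rewrite ler_pM2r ?subr_gt0.
  lra.
- have [c cin E] := mvt w u w0 wu u2.
  move: cin; rewrite in_itv /= => /andP[c1 c2].
  have : (derive1 kk) c <= (derive1 kk) w by apply: kd_le; lra.
  move=> h.
  have : (derive1 kk) c * (u - w) <= (derive1 kk) w * (u - w) by rewrite ler_pM2r ?subr_gt0.
  lra.
Qed.

Lemma kderiv_approx (w : R) : 0 < w < 2 * pi -> forall e : R, 0 < e ->
  exists2 d, 0 < d & forall t : R, `|t| < d ->
    `|kk (w + t) - kk w - (derive1 kk) w * t| <= e * `|t|.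
Proof.
move=> hw e e0; have dw := kd1 w hw.
have /eqaddoP /(_ e e0) := derivable_nbhs dw.
move=> /nbhs_norm0P [d d0 Hd]; exists d => // t tl.
have := Hd t tl; rewrite /= !fctE /cst derive1E.
rewrite [t%:A]mulr1 [w + t]addrC opprD addrA.
by rewrite [_ * t]mulrC.
Qed.


Definition sl (u : R) : R :=
  if (0 < u < 2 * pi) then derive1 kk u
  else if (- (2 * pi) < u < 0) then derive1 kk (u + 2 * pi) else 0.

Definition condK (u u' : R) : Prop :=
  (u = u') \/ ((0 < u < 2 * pi) /\ (0 < u' < 2 * pi)) \/
  ((- (2 * pi) < u < 0) /\ (- (2 * pi) < u' < 0)).

Definition inwin (u : R) : Prop := (0 < u < 2 * pi) \/ (- (2 * pi) < u < 0).

Lemma Kstep (u u' : R) : condK u u' -> (K u' <= K u + (sl u * (u' - u))%:E)%E.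
Proof.
case=> [->|[[hu hu']|[hu hu']]].
- by rewrite subrr mulr0 adde0.
- rewrite (Kfin u hu) (Kfin u' hu') -EFinD lee_fin /sl hu.
  exact: ktangent.
- have hu2 : 0 < u + 2 * pi < 2 * pi.
    by move: hu => /andP[h1 h2]; apply/andP; split; lra.
  have hu2' : 0 < u' + 2 * pi < 2 * pi.
    by move: hu' => /andP[h1 h2]; apply/andP; split; lra.
  rewrite -(Kper u) -(Kper u') (Kfin _ hu2) (Kfin _ hu2') -EFinD lee_fin /sl.
  have -> : (0 < u < 2 * pi) = false.
    by apply/negbTE; move: hu => /andP[h1 h2]; apply/negP => /andP[h3 h4]; lra.
  rewrite hu.
  have -> : u' - u = (u' + 2 * pi) - (u + 2 * pi) by ring.
  exact: ktangent.
Qed.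

Lemma Kfin2 (u : R) : inwin u -> K u = (fine (K u))%:E.
Proof.
case=> hu; first by rewrite (Kfin u hu).
have hu2 : 0 < u + 2 * pi < 2 * pi.
  by move: hu => /andP[h1 h2]; apply/andP; split; lra.
by rewrite -(Kper u) (Kfin _ hu2).
Qed.

Lemma Klo (u : R) : inwin u -> forall e : R, 0 < e ->
  \forall t \near (0 : R), ((fine (K u) + sl u * t - e * `|t|)%:E <= K (u + t))%E.
Proof.
move=> hu e e0.
pose w := if (0 < u < 2 * pi) then u else u + 2 * pi.
have hw : 0 < w < 2 * pi.
  rewrite /w; case: ifP => [//|hf]; case: hu => hu; first by rewrite hu in hf.
  by move: hu => /andP[h1 h2]; apply/andP; split; lra.
have Kw t : K (u + t) = K (w + t).
  rewrite /w; case: ifP => // _.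
  by rewrite -(Kper (u + t)); congr K; ring.
have slw : sl u = derive1 kk w.
  rewrite /sl /w; case: ifP => // h.
  case: hu => hu; first by rewrite hu in h.
  by rewrite hu.
have [d d0 Hd] := kderiv_approx w hw e e0.
apply/nbhs_norm0P.
move: hw => /andP[w0 w2].
exists (Num.min d (Num.min w (2 * pi - w))).
  by rewrite /= !lt_min d0 w0 subr_gt0 w2.
move=> t /=; rewrite !lt_min => /andP[td /andP[tw tw2]].
have hwt : 0 < w + t < 2 * pi.
  have := ler_norm t; have := ler_normr t.
  move: tw tw2; rewrite ?le_normr ?ltr_norml => /andP[a1 a2] /andP[b1 b2].
  by move=> _ _; apply/andP; split; lra.
rewrite Kw (Kfin _ hwt).
have Ku : fine (K u) = kk w.
  rewrite /kk /w; case: ifP => // _; by rewrite Kper.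
rewrite Ku slw lee_fin.
have := Hd t td; rewrite ler_norml => /andP[h1 h2].
lra.
Qed.

End Kern.

Set Implicit Arguments. Unset Strict Implicit. Unset Printing Implicit Defensive.
Import Order.TTheory GRing.Theory Num.Theory.
Import numFieldNormedType.Exports.
Local Open Scope classical_set_scope.
Local Open Scope ring_scope.

Section Comb.
Context {R : realType} {n : nat} (s : 'S_n).

Lemma sext0 : sext s 0 = 0%N. Proof. by []. Qed.

Lemma sextN : sext s n.+1 = n.+1.
Proof. by rewrite /sext insubF // ltnn. Qed.

Lemma sextS (i : 'I_n) : sext s i.+1 = (s i).+1.
Proof. by rewrite /sext; case: insubP => [i' _ /val_inj -> //|]; rewrite ltn_ord. Qed.

Lemma ypos0 (y : 'rV[R]_n) : ypos y 0 = 0. Proof. by []. Qed.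

Lemma yposN (y : 'rV[R]_n) : ypos y n.+1 = 2 * pi.
Proof. by rewrite /ypos insubF // ltnn. Qed.

Lemma yposS (y : 'rV[R]_n) (i : 'I_n) : ypos y i.+1 = y ord0 i.
Proof. by rewrite /ypos; case: insubP => [i' _ /val_inj -> //|]; rewrite ltn_ord. Qed.

Lemma sext_pos (j : 'I_n) : sext s (s^-1 j)%g.+1 = j.+1.
Proof. by rewrite sextS permKV. Qed.

Lemma ypos_pos (y : 'rV[R]_n) (j : 'I_n) :
  ypos y (sext s (s^-1 j)%g.+1) = y ord0 j.
Proof. by rewrite sext_pos yposS. Qed.

Definition yd (h : 'rV[R]_n) (j : nat) : R :=
  if j is k.+1 then (if (insub k : option 'I_n) is Some i then h ord0 i else 0)
  else 0.

Lemma ypos_add (y h : 'rV[R]_n) j : ypos (y + h) j = ypos y j + yd h j.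
Proof.
case: j => [|k] /=; first by rewrite /ypos addr0.
rewrite /ypos /yd; case: insubP => [i _ _|_]; first by rewrite mxE.
by rewrite addr0.
Qed.

Lemma norm_coord (h : 'rV[R]_n) (i : 'I_n) : `|h ord0 i| <= `|h|.
Proof.
have /mapP[j Hj ->] : `|h ord0 i| \in [seq `|h x.1 x.2| | x : 'I_1 * 'I_n].
  by apply/mapP; exists (ord0, i) => //=; rewrite mem_enum.
by rewrite [leRHS]/Num.norm /= mx_normrE; apply/bigmax_geP; right => /=; exists j.
Qed.

Lemma yd_norm (h : 'rV[R]_n) j : `|yd h j| <= `|h|.
Proof.
case: j => [|k] /=; first by rewrite normr0.
by case: insubP => [i _ _|_]; [exact: norm_coord|rewrite normr0].
Qed.

Lemma sext_le k : (k <= n.+1)%N -> (sext s k <= n.+1)%N.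
Proof.
move=> hk; case: k hk => [//|k hk].
rewrite /sext; case: insubP => [i _ _|_] //.
by rewrite ltnS ltnW // ltn_ord.
Qed.

Lemma sext_mid k : (0 < k <= n)%N -> (0 < sext s k <= n)%N.
Proof.
move=> hk; case: k hk => [//|k hk].
rewrite /sext; case: insubP => [i _ _|] /=; first by rewrite ltn_ord.
by move: hk => /= ->.
Qed.

Definition in_box (y : 'rV[R]_n) := forall i : 'I_n, 0 < y ord0 i < 2 * pi.

Lemma sim_step (y : 'rV[R]_n) : in_simplex s y ->
  forall k, (k <= n)%N -> ypos y (sext s k) < ypos y (sext s k.+1).
Proof. by []. Qed.

Lemma sim_lt (y : 'rV[R]_n) : in_simplex s y ->
  forall a b, (a < b)%N -> (b <= n.+1)%N -> ypos y (sext s a) < ypos y (sext s b).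
Proof.
move=> hy a; elim=> [|b IH] // ab hb.
rewrite leq_eqVlt in ab; case/orP: ab => [/eqP [->]|ab].
  by apply: hy.
apply: lt_trans (IH ab (ltnW hb)) _; exact: hy.
Qed.

Lemma sim_le (y : 'rV[R]_n) : in_simplex s y ->
  forall a b, (a <= b)%N -> (b <= n.+1)%N -> ypos y (sext s a) <= ypos y (sext s b).
Proof.
move=> hy a b; rewrite leq_eqVlt => /orP[/eqP->|ab] hb //.
by rewrite ltW // sim_lt.
Qed.

Lemma sim_range (y : 'rV[R]_n) : in_simplex s y ->
  forall m, (m <= n.+1)%N -> 0 <= ypos y (sext s m) <= 2 * pi.
Proof.
move=> hy m hm; apply/andP; split.
  by have := sim_le hy (leq0n m) hm; rewrite sext0 ypos0.
by have := sim_le hy hm (leqnn _); rewrite sextN yposN.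
Qed.

Lemma sim_range_mid (y : 'rV[R]_n) : in_simplex s y ->
  forall m, (0 < m <= n)%N -> 0 < ypos y (sext s m) < 2 * pi.
Proof.
move=> hy m /andP[m0 mn]; apply/andP; split.
  by have := sim_lt hy m0 (leqW mn); rewrite sext0 ypos0.
by have := sim_lt hy (mn : (m < n.+1)%N) (leqnn _); rewrite sextN yposN.
Qed.

Lemma sim_box (y : 'rV[R]_n) : in_simplex s y -> in_box y.
Proof.
move=> hy j; rewrite -(ypos_pos y j); apply: sim_range_mid => //.
by rewrite /= ltn_ord.
Qed.


Lemma int_pos (y : 'rV[R]_n) : in_simplex s y -> forall k (t : R), (k <= n)%N ->
  ypos y (sext s k) < t -> t < ypos y (sext s k.+1) -> 0 < t < 2 * pi.
Proof.
move=> hy k t hk h1 h2.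
have /andP[a1 a2] := sim_range hy (leqW hk).
have /andP[b1 b2] := sim_range hy (hk : (k < n.+1)%N).
by apply/andP; split; lra.
Qed.

Lemma int_term (y : 'rV[R]_n) : in_simplex s y -> forall k (t : R) (j : 'I_n),
  (k <= n)%N -> ypos y (sext s k) < t -> t < ypos y (sext s k.+1) ->
  (((s^-1 j)%g.+1 <= k)%N -> 0 < t - y ord0 j < 2 * pi) /\
  ((k < (s^-1 j)%g.+1)%N -> - (2 * pi) < t - y ord0 j < 0).
Proof.
move=> hy k t j hk h1 h2.
have /andP[t0 t2] := int_pos hy hk h1 h2.
have /andP[y0 y2] := sim_box hy j.
split=> hp.
  have := sim_le hy hp (leqW hk); rewrite ypos_pos => h3.
  by apply/andP; split; lra.
have h4 : (((s^-1 j)%g.+1) <= n.+1)%N by rewrite ltnS ltnW.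
have := sim_le hy hp h4; rewrite ypos_pos => h5.
by apply/andP; split; lra.
Qed.

Lemma end_term (y : 'rV[R]_n) : in_simplex s y -> forall q (j : 'I_n),
  (q <= n.+1)%N ->
  (((s^-1 j)%g.+1 = q) -> ypos y (sext s q) - y ord0 j = 0) /\
  (((s^-1 j)%g.+1 < q)%N -> 0 < ypos y (sext s q) - y ord0 j < 2 * pi) /\
  ((q < (s^-1 j)%g.+1)%N -> - (2 * pi) < ypos y (sext s q) - y ord0 j < 0).
Proof.
move=> hy q j hq.
have /andP[q0 q2] := sim_range hy hq.
have /andP[y0 y2] := sim_box hy j.
have hp : (((s^-1 j)%g.+1) <= n.+1)%N by rewrite ltnS ltnW.
split; first by move=> <-; rewrite ypos_pos subrr.
split=> h.
  have := sim_lt hy h hq; rewrite ypos_pos => h3.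
  by apply/andP; split; lra.
have := sim_lt hy h hp; rewrite ypos_pos => h3.
by apply/andP; split; lra.
Qed.

Lemma near_simplex (y : 'rV[R]_n) : in_simplex s y ->
  \forall h \near (0 : 'rV[R]_n), in_simplex s (y + h).
Proof.
move=> hy.
have H : forall k : 'I_n.+1, \forall h \near (0 : 'rV[R]_n),
    ypos (y + h) (sext s k) < ypos (y + h) (sext s k.+1).
  move=> k; apply/nbhs_norm0P.
  have hk := hy k (ltn_ord k : (k <= n)%N).
  exists ((ypos y (sext s k.+1) - ypos y (sext s k)) / 2).
    by rewrite /= divr_gt0 // subr_gt0.
  move=> h /= hh; rewrite !ypos_add.
  have := yd_norm h (sext s k); have := yd_norm h (sext s k.+1).
  rewrite !ler_norml => /andP[a1 a2] /andP[b1 b2].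
  lra.
have H2 := filter_forall (nbhs_filter (0 : 'rV[R]_n)) H.
apply: filterS H2 => h Hh k hk.
exact: (Hh (Ordinal (hk : (k < n.+1)%N))).
Qed.

Lemma near_int (y : 'rV[R]_n) k (z : R) :
  ypos y (sext s k) < z -> z < ypos y (sext s k.+1) ->
  \forall h \near (0 : 'rV[R]_n),
    ypos (y + h) (sext s k) < z /\ z < ypos (y + h) (sext s k.+1).
Proof.
move=> h1 h2; apply/nbhs_norm0P.
exists (Num.min (z - ypos y (sext s k)) (ypos y (sext s k.+1) - z)).
  by rewrite /= lt_min !subr_gt0 h1 h2.
move=> h /=; rewrite lt_min => /andP[d1 d2]; rewrite !ypos_add.
have := yd_norm h (sext s k); have := yd_norm h (sext s k.+1).
rewrite !ler_norml => /andP[a1 a2] /andP[b1 b2].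
split; lra.
Qed.

End Comb.

Set Implicit Arguments. Unset Strict Implicit. Unset Printing Implicit Defensive.
Import Order.TTheory GRing.Theory Num.Theory.
Import numFieldNormedType.Exports.
Local Open Scope classical_set_scope.
Local Open Scope ring_scope.

Section Gen.
Context {R : realType} {n : nat} (K : 'I_n.+1 -> R -> \bar R).
Hypothesis hK : forall j, torus_kernel (K j).
Hypothesis hC : forall j, C2_strictly_concave (K j).

Lemma Fsum_step (y y' : 'rV[R]_n) (t0 t : R) :
  condK t0 t -> (forall j : 'I_n, condK (t0 - y ord0 j) (t - y' ord0 j)) ->
  (Fsum K y' t <= Fsum K y t0 + (sl (K ord0) t0 * (t - t0) +
     \sum_(j < n) sl (K (lift ord0 j)) (t0 - y ord0 j) *
        ((t - y' ord0 j) - (t0 - y ord0 j)))%:E)%E.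
Proof.
move=> c0 cj; rewrite /Fsum EFinD addeACA.
apply: leeD; first exact: Kstep.
rewrite -sumEFin -big_split /=.
apply: lee_sum => j _; exact: Kstep.
Qed.

Lemma Fsum_lo (y : 'rV[R]_n) (t a0 : R) (a : 'I_n -> R) :
  (a0%:E <= K ord0 t)%E -> (forall j, ((a j)%:E <= K (lift ord0 j) (t - y ord0 j))%E) ->
  ((a0 + \sum_(j < n) a j)%:E <= Fsum K y t)%E.
Proof.
move=> h0 hj; rewrite /Fsum EFinD; apply: leeD => //.
rewrite -sumEFin; apply: lee_sum => j _; exact: hj.
Qed.

Lemma sum_coord_bound (a : 'I_n -> R) (h : 'rV[R]_n) :
  `|\sum_(j < n) a j * h ord0 j| <= (\sum_(j < n) `|a j|) * `|h|.
Proof.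
rewrite mulr_suml; apply: le_trans (ler_norm_sum _ _ _) _.
apply: ler_sum => j _; rewrite normrM; apply: ler_wpM2l => //.
exact: norm_coord.
Qed.

Lemma near_coord (P : R -> Prop) :
  (\forall t \near (0 : R), P t) ->
  forall j : 'I_n, \forall h \near (0 : 'rV[R]_n), P (- (h : 'rV[R]_n) ord0 j).
Proof.
move=> /nbhs_norm0P [d d0 Hd] j; apply/nbhs_norm0P; exists d => // h /= hh.
apply: Hd => /=; rewrite normrN; exact: le_lt_trans (norm_coord h j) hh.
Qed.

End Gen.

Set Implicit Arguments. Unset Strict Implicit. Unset Printing Implicit Defensive.
Import Order.TTheory GRing.Theory Num.Theory.
Import numFieldNormedType.Exports.
Local Open Scope classical_set_scope.
Local Open Scope ring_scope.

Section PerK.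
Context {R : realType} {n : nat} (K : 'I_n.+1 -> R -> \bar R) (s : 'S_n).
Hypothesis hK : forall j, torus_kernel (K j).
Hypothesis hC : forall j, C2_strictly_concave (K j).
Variables (y : 'rV[R]_n) (k : nat) (z : R).
Hypothesis hy : in_simplex s y.
Hypothesis hk : (k <= n)%N.
Hypothesis hz1 : ypos y (sext s k) < z.
Hypothesis hz2 : z < ypos y (sext s k.+1).
Hypothesis hF : Fsum K y z = msupE K s y k.
Hypothesis hU : forall t, Ileft s y k <= t <= Iright s y k ->
  Fsum K y t = msupE K s y k -> t = z.

Lemma KfinJ j (u : R) : inwin u -> K j u = (fine (K j u))%:E.
Proof. exact: (Kfin2 (K j) (hK j) u). Qed.

Definition slz0 := sl (K ord0) z.
Definition slz (j : 'I_n) := sl (K (lift ord0 j)) (z - y ord0 j).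
Definition Sz := slz0 + \sum_(j < n) slz j.
Definition Freal (y' : 'rV[R]_n) (t : R) :=
  fine (K ord0 t) + \sum_(j < n) fine (K (lift ord0 j) (t - y' ord0 j)).

Lemma z_win : inwin z.
Proof. by left; exact: (int_pos hy hk hz1 hz2). Qed.

Lemma zj_win (j : 'I_n) : inwin (z - y ord0 j).
Proof.
have [h1 h2] := int_term hy j hk hz1 hz2.
by case: (leqP (s^-1 j)%g.+1 k) => h; [left; apply: h1|right; apply: h2].
Qed.

Lemma Fsum_z : Fsum K y z = (Freal y z)%:E.
Proof.
rewrite /Fsum /Freal EFinD (KfinJ ord0 z_win); congr (_ + _)%E.
rewrite -sumEFin; apply: eq_bigr => j _; exact: (KfinJ _ (zj_win j)).
Qed.

Lemma in_I (y' : 'rV[R]_n) (t : R) :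
  ypos y' (sext s k) <= t <= ypos y' (sext s k.+1) ->
  (Fsum K y' t <= msupE K s y' k)%E.
Proof.
move=> ht; apply: ereal_sup_ubound; by exists t => //.
Qed.


Lemma sum_affine (a b : 'I_n -> R) (t e : R) :
  \sum_(j < n) (a j + b j * t - e) = \sum_(j < n) a j + (\sum_(j < n) b j) * t - n%:R * e.
Proof.
by rewrite !big_split /= sumrN -mulr_suml sumr_const card_ord mulr_natl.
Qed.

Lemma Sz0 : Sz = 0.
Proof.
apply/eqP; apply: contraT => hS.
have aS : 0 < `|Sz| by rewrite normr_gt0.
pose eps := `|Sz| / (2 * n.+1%:R).
have e0 : 0 < eps by rewrite divr_gt0 // mulr_gt0 // ltr0n.
have N0 := Klo (K ord0) (hK ord0) (hC ord0) z z_win eps e0.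
have Nj : forall j : 'I_n, \forall t \near (0:R),
    ((fine (K (lift ord0 j) (z - y ord0 j)) + slz j * t - eps * `|t|)%:E <=
      K (lift ord0 j) ((z - y ord0 j) + t))%E.
  move=> j; exact: (Klo (K (lift ord0 j)) (hK _) (hC _) _ (zj_win j) eps e0).
have NJ := filter_forall (nbhs_filter (0:R)) Nj.
have NI : \forall t \near (0:R), ypos y (sext s k) <= z + t <= ypos y (sext s k.+1).
  apply/nbhs_norm0P; exists (Num.min (z - ypos y (sext s k)) (ypos y (sext s k.+1) - z)).
    by rewrite /= lt_min !subr_gt0 hz1 hz2.
  move=> t /=; rewrite lt_min !ltr_norml => /andP[/andP[a1 a2] /andP[b1 b2]].
  by apply/andP; split; lra.
move: N0 => /nbhs_norm0P [d0 d00 H0].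
move: NJ => /nbhs_norm0P [d1 d10 H1].
move: NI => /nbhs_norm0P [d2 d20 H2].
pose d := Num.min d0 (Num.min d1 d2) / 2.
have dpos : 0 < d by rewrite divr_gt0 // !lt_min d00 d10 d20.
have dlt : d < Num.min d0 (Num.min d1 d2).
  by rewrite /d ltr_pdivrMr // ltr_pMr // ?ltr1n // !lt_min d00 d10 d20.
move: dlt; rewrite !lt_min => /andP[dl0 /andP[dl1 dl2]].
pose tau := if 0 < Sz then d else - d.
have ntau : `|tau| = d by rewrite /tau; case: ifP => _; rewrite ?normrN gtr0_norm.
have Stau : Sz * tau = `|Sz| * d.
  rewrite /tau; case: ifP => h; first by rewrite gtr0_norm.
  rewrite ltr0_norm; first by rewrite mulrN mulNr.
  by rewrite lt_neqAle hS /= leNgt h.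
have t0 : `|tau| < d0 by rewrite ntau.
have t1 : `|tau| < d1 by rewrite ntau.
have t2 : `|tau| < d2 by rewrite ntau.
have A0 := H0 tau t0.
have A1 := H1 tau t1.
have A2 := H2 tau t2.
have low := Fsum_lo (y := y) (t := z + tau) (a := fun j =>
   fine (K (lift ord0 j) (z - y ord0 j)) + slz j * tau - eps * `|tau|) A0.
have up := in_I A2; rewrite -hF Fsum_z in up.
have : ((fine (K ord0 z) + sl (K ord0) z * tau - eps * `|tau| +
    \sum_(j < n) (fine (K (lift ord0 j) (z - y ord0 j)) + slz j * tau - eps * `|tau|))%:E
    <= (Freal y z)%:E)%E.
  apply: le_trans up; apply: low => j /=.
  rewrite [z + tau - _]addrAC; exact: A1 j.
rewrite lee_fin sum_affine /Freal ntau => h.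
have e1 : Sz * tau = sl (K ord0) z * tau + (\sum_(j < n) slz j) * tau.
  by rewrite /Sz /slz0 mulrDl.
have e2 : n.+1%:R * (eps * d) = `|Sz| / 2 * d.
  rewrite /eps mulrA mulrA; congr (_ * _); field.
  by rewrite addrC natr1 pnatr_eq0.
have e3 : n.+1%:R * (eps * d) = eps * d + n%:R * (eps * d).
  by rewrite -addn1 natrD mulrDl mul1r addrC.
have key : `|Sz| * d <= `|Sz| / 2 * d by lra.
have : 0 < `|Sz| * d by rewrite mulr_gt0.
lra.
Qed.



Definition gz (j : 'I_n) := - slz j.
Definition gh (h : 'rV[R]_n) := \sum_(j < n) gz j * h ord0 j.

Lemma up_int (h : 'rV[R]_n) : in_simplex s (y + h) -> forall t : R,
  ypos (y + h) (sext s k) < t -> t < ypos (y + h) (sext s k.+1) ->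
  (Fsum K (y + h) t <= (Freal y z + gh h)%:E)%E.
Proof.
move=> hy' t ht1 ht2.
have c0 : condK z t.
  by right; left; split; [exact: (int_pos hy hk hz1 hz2)|exact: (int_pos hy' hk ht1 ht2)].
have cj : forall j : 'I_n, condK (z - y ord0 j) (t - (y + h) ord0 j).
  move=> j; have [a1 a2] := int_term hy j hk hz1 hz2.
  have [b1 b2] := int_term hy' j hk ht1 ht2.
  case: (leqP (s^-1 j)%g.+1 k) => hp; [right; left|right; right]; split;
    by [apply: a1|apply: b1|apply: a2|apply: b2].
apply: le_trans (Fsum_step hK hC c0 cj) _; rewrite Fsum_z lee_fin lerD2l.
have -> : \sum_(j < n) sl (K (lift ord0 j)) (z - y ord0 j) *
    (t - (y + h) ord0 j - (z - y ord0 j)) =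
    \sum_(j < n) (slz j * (t - z) + gz j * h ord0 j).
  apply: eq_bigr => j _; rewrite mxE /gz /slz; ring.
rewrite big_split /= -mulr_suml -/(gh h).
have := Sz0; rewrite /Sz /slz0 => e.
have -> : sl (K ord0) z * (t - z) + ((\sum_(i < n) slz i) * (t - z) + gh h) =
   (sl (K ord0) z + \sum_(i < n) slz i) * (t - z) + gh h by ring.
by rewrite e mul0r add0r.
Qed.

Definition Lq (h : 'rV[R]_n) (q : nat) :=
  sl (K ord0) (ypos y (sext s q)) * yd h (sext s q) +
  \sum_(j < n) sl (K (lift ord0 j)) (ypos y (sext s q) - y ord0 j) *
     (yd h (sext s q) - h ord0 j).

Lemma up_end (h : 'rV[R]_n) q : in_simplex s (y + h) -> (q <= n.+1)%N ->
  (Fsum K (y + h) (ypos (y + h) (sext s q)) <= Fsum K y (ypos y (sext s q)) + (Lq h q)%:E)%E.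
Proof.
move=> hy' hq.
have c0 : condK (ypos y (sext s q)) (ypos (y + h) (sext s q)).
  case: q hq => [|q] hq; first by left; rewrite sext0.
  rewrite leq_eqVlt in hq; case/orP: hq => [/eqP[->]|hq].
    by left; rewrite sextN !yposN.
  right; left; split; apply: sim_range_mid => //.
have cj : forall j : 'I_n, condK (ypos y (sext s q) - y ord0 j)
    (ypos (y + h) (sext s q) - (y + h) ord0 j).
  move=> j; have [a1 [a2 a3]] := end_term hy j hq.
  have [b1 [b2 b3]] := end_term hy' j hq.
  case: (ltngtP (s^-1 j)%g.+1 q) => hp.
  - by right; left; split; [apply: a2|apply: b2].
  - by right; right; split; [apply: a3|apply: b3].
  - by left; rewrite a1 // b1.
apply: le_trans (Fsum_step hK hC c0 cj) _; rewrite leeD2l // lee_fin /Lq.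
rewrite ypos_add le_eqVlt; apply/orP; left; apply/eqP.
congr (_ + _); first by congr (_ * _); ring.
apply: eq_bigr => j _; rewrite mxE; congr (_ * _); ring.
Qed.


Definition Cq (q : nat) :=
  `|sl (K ord0) (ypos y (sext s q))| +
  \sum_(j < n) `|sl (K (lift ord0 j)) (ypos y (sext s q) - y ord0 j)| +
  \sum_(j < n) `|sl (K (lift ord0 j)) (ypos y (sext s q) - y ord0 j)| +
  \sum_(j < n) `|gz j|.

Lemma Lq_bound (h : 'rV[R]_n) q : `|Lq h q - gh h| <= Cq q * `|h|.
Proof.
set c0 := sl (K ord0) (ypos y (sext s q)).
set c := fun j : 'I_n => sl (K (lift ord0 j)) (ypos y (sext s q) - y ord0 j).
set Y := yd h (sext s q).
have e : Lq h q - gh h = c0 * Y + (\sum_(j < n) c j) * Y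
   - \sum_(j < n) c j * h ord0 j - gh h.
  rewrite /Lq -/c0 -/Y.
  have -> : \sum_(j < n) sl (K (lift ord0 j)) (ypos y (sext s q) - y ord0 j) *
     (Y - h ord0 j) = \sum_(j < n) (c j * Y - c j * h ord0 j).
    by apply: eq_bigr => j _; rewrite /c; ring.
  rewrite sumrB -mulr_suml; ring.
rewrite e.
have hY : `|Y| <= `|h| by apply: yd_norm.
have b1 : `|c0 * Y| <= `|c0| * `|h| by rewrite normrM ler_wpM2l.
have b2 : `|(\sum_(j < n) c j) * Y| <= (\sum_(j < n) `|c j|) * `|h|.
  rewrite normrM; apply: ler_pM => //; exact: ler_norm_sum.
have b3 := sum_coord_bound c h.
have b4 := sum_coord_bound gz h.
rewrite /Cq -/c0 !mulrDl.
have t1 := ler_normD (c0 * Y + (\sum_(j < n) c j) * Y - \sum_(j < n) c j * h ord0 j) (- gh h).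
have t2 := ler_normD (c0 * Y + (\sum_(j < n) c j) * Y) (- \sum_(j < n) c j * h ord0 j).
have t3 := ler_normD (c0 * Y) ((\sum_(j < n) c j) * Y).
rewrite !normrN in t1 t2.
rewrite /gh in t1 b4.
lra.
Qed.

Lemma Cq_ge0 q : 0 <= Cq q.
Proof.
rewrite /Cq; apply: addr_ge0; last exact: sumr_ge0.
apply: addr_ge0; last exact: sumr_ge0.
apply: addr_ge0 => //; exact: sumr_ge0.
Qed.

Lemma end_lt q : (k <= q <= k.+1)%N ->
  (Fsum K y (ypos y (sext s q)) < (Freal y z)%:E)%E.
Proof.
move=> /andP[q1 q2].
have hq : (q <= n.+1)%N by apply: leq_trans q2 _.
have r1 : Ileft s y k <= ypos y (sext s q) <= Iright s y k.
  by rewrite /Ileft /Iright; apply/andP; split; apply: sim_le.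
rewrite -Fsum_z hF lt_neqAle in_I // andbT.
apply/eqP => e; have := hU r1 e.
move: q2; rewrite leq_eqVlt => /orP[/eqP->|q2].
  by move=> h; move: hz2; rewrite -h ltxx.
have -> : q = k by apply/eqP; rewrite eqn_leq q1 -ltnS q2.
by move=> h; move: hz1; rewrite -h ltxx.
Qed.

Lemma near_end q : (k <= q <= k.+1)%N ->
  \forall h \near (0 : 'rV[R]_n), in_simplex s (y + h) ->
    (Fsum K (y + h) (ypos (y + h) (sext s q)) <= (Freal y z + gh h)%:E)%E.
Proof.
move=> hq.
have hq' : (q <= n.+1)%N by case/andP: hq => _ q2; apply: leq_trans q2 _.
have := end_lt hq.
case e : (Fsum K y (ypos y (sext s q))) => [r| |] hlt.
- rewrite lte_fin in hlt.
  apply/nbhs_norm0P; exists ((Freal y z - r) / (Cq q + 1)).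
    by rewrite /= divr_gt0 ?subr_gt0 // ltr_wpDl // Cq_ge0.
  move=> h /= hh hy'.
  have U := up_end hy' hq'; rewrite e in U.
  apply: (le_trans U); rewrite lee_fin.
  have Cpos : 0 < Cq q + 1.
    by rewrite ltr_wpDl // Cq_ge0.
  have hh' : `|h| * (Cq q + 1) < Freal y z - r by rewrite -ltr_pdivlMr.
  have := Lq_bound h q; rewrite ler_norml => /andP[_ b].
  have : Cq q * `|h| <= `|h| * (Cq q + 1).
    by rewrite mulrC ler_wpM2l // lerDl.
  lra.
- by [].
- apply/nbhs_norm0P; exists 1; first by rewrite /= ltr01.
  move=> h _ hy'.
  have U := up_end hy' hq'; rewrite e in U.
  by apply: (le_trans U); rewrite /= leNye.
Qed.


Lemma near_up : \forall h \near (0 : 'rV[R]_n),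
  (msupE K s (y + h) k <= (Freal y z + gh h)%:E)%E.
Proof.
have N1 := near_simplex hy.
have hk1 : (k <= k <= k.+1)%N by rewrite leqnn leqnSn.
have hk2 : (k <= k.+1 <= k.+1)%N by rewrite leqnSn leqnn.
have N2 := near_end hk1.
have N3 := near_end hk2.
near=> h.
have hy' : in_simplex s (y + h) by near: h; exact: N1.
have e2 : in_simplex s (y + h) ->
    (Fsum K (y + h) (ypos (y + h) (sext s k)) <= (Freal y z + gh h)%:E)%E.
  by near: h; exact: N2.
have e3 : in_simplex s (y + h) ->
    (Fsum K (y + h) (ypos (y + h) (sext s k.+1)) <= (Freal y z + gh h)%:E)%E.
  by near: h; exact: N3.
move: e2 e3 => /(_ hy') e2 /(_ hy') e3.
apply: ge_ereal_sup => _ [t ht <-].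
move: ht; rewrite /= in_itv /= => /andP[t1 t2].
move: t1; rewrite le_eqVlt => /orP[/eqP <-|t1] //.
move: t2; rewrite le_eqVlt => /orP[/eqP ->|t2] //.
exact: up_int.
Unshelve. all: by end_near. Qed.


Lemma near_low (eps : R) : 0 < eps -> \forall h \near (0 : 'rV[R]_n),
  ((Freal y z + gh h - eps * \sum_(j < n) `|h ord0 j|)%:E <= msupE K s (y + h) k)%E.
Proof.
move=> e0.
have Nj : forall j : 'I_n, \forall h \near (0 : 'rV[R]_n),
    ((fine (K (lift ord0 j) (z - y ord0 j)) + slz j * (- (h : 'rV[R]_n) ord0 j) - eps * `|- h ord0 j|)%:E <=
      K (lift ord0 j) ((z - y ord0 j) + (- h ord0 j)))%E.
  move=> j; apply: (near_coord (P := fun t =>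
    ((fine (K (lift ord0 j) (z - y ord0 j)) + slz j * t - eps * `|t|)%:E <=
      K (lift ord0 j) ((z - y ord0 j) + t))%E)).
  exact: (Klo (K (lift ord0 j)) (hK _) (hC _) _ (zj_win j) eps e0).
have NJ := filter_forall (nbhs_filter (0 : 'rV[R]_n)) Nj.
have NI := near_int (y := y) hz1 hz2.
near=> h.
have A1 : forall j : 'I_n,
    ((fine (K (lift ord0 j) (z - y ord0 j)) + slz j * (- h ord0 j) - eps * `|- h ord0 j|)%:E <=
      K (lift ord0 j) ((z - y ord0 j) + (- h ord0 j)))%E.
  by near: h; exact: NJ.
have [i1 i2] : ypos (y + h) (sext s k) < z /\ z < ypos (y + h) (sext s k.+1).
  by near: h; exact: NI.
have up := in_I (y' := y + h) (t := z).
have low := Fsum_lo (K := K) (y := y + h) (t := z) (a0 := fine (K ord0 z)) (a := fun j =>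
   fine (K (lift ord0 j) (z - y ord0 j)) + slz j * (- h ord0 j) - eps * `|- h ord0 j|).
have hz' : ypos (y + h) (sext s k) <= z <= ypos (y + h) (sext s k.+1) by rewrite !ltW.
have U := up hz'.
have h0 : ((fine (K ord0 z))%:E <= K ord0 z)%E by rewrite (KfinJ ord0 z_win).
have hj : forall j : 'I_n, ((fine (K (lift ord0 j) (z - y ord0 j)) + slz j * (- h ord0 j) -
     eps * `|- h ord0 j|)%:E <= K (lift ord0 j) (z - (y + h) ord0 j))%E.
  move=> j; rewrite mxE.
  have -> : z - (y ord0 j + h ord0 j) = z - y ord0 j + - h ord0 j by ring.
  exact: A1 j.
have L := low h0 hj.
apply: le_trans U; apply: le_trans L.
rewrite lee_fin /Freal /gh.
have -> : \sum_(j < n) (fine (K (lift ord0 j) (z - y ord0 j)) + slz j * - h ord0 j -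
     eps * `|- h ord0 j|) =
   \sum_(j < n) fine (K (lift ord0 j) (z - y ord0 j)) + \sum_(j < n) gz j * h ord0 j -
     eps * \sum_(j < n) `|h ord0 j|.
  rewrite !big_split /= sumrN mulr_sumr; congr (_ + _ - _).
    by apply: eq_bigr => j _; rewrite /gz mulrN mulNr.
  by apply: eq_bigr => j _; rewrite normrN.
lra.
Unshelve. all: by end_near. Qed.


Lemma danskin (eps : R) : 0 < eps -> \forall h \near (0 : 'rV[R]_n),
  `|fine (msupE K s (y + h) k) - Freal y z - gh h| <= eps * `|h|.
Proof.
move=> e0.
have n0 : 0 < n.+1%:R :> R by rewrite ltr0n.
have e1 : 0 < eps / n.+1%:R by rewrite divr_gt0.
have NL := near_low e1.
have NU := near_up.
near=> h.
have L : ((Freal y z + gh h - eps / n.+1%:R * \sum_(j < n) `|h ord0 j|)%:E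
   <= msupE K s (y + h) k)%E by near: h; exact: NL.
have U : (msupE K s (y + h) k <= (Freal y z + gh h)%:E)%E by near: h; exact: NU.
have hs : \sum_(j < n) `|h ord0 j| <= n%:R * `|h|.
  apply: (@le_trans _ _ (\sum_(j < n) `|h|)).
    by apply: ler_sum => j _; exact: norm_coord.
  by rewrite sumr_const card_ord mulr_natl.
have hb : eps / n.+1%:R * \sum_(j < n) `|h ord0 j| <= eps * `|h|.
  apply: le_trans (ler_wpM2l (ltW e1) hs) _.
  rewrite mulrA ler_wpM2r // mulrAC ler_pdivrMr // ler_wpM2l ?ltW //.
  by rewrite ltr_nat.
move: L U; case: (msupE K s (y + h) k) => [r| |] //=.
  rewrite !lee_fin => L U.
  have p : 0 <= eps * `|h| by rewrite mulr_ge0 // ltW.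
  move: L U hb p; set F := Freal y z; set G := gh h;
    set X := eps / n.+1%:R * _; set Y := eps * _ => L U hb p.
  rewrite ler_norml; apply/andP; split; lra.
Unshelve. all: by end_near. Qed.

End PerK.

Set Implicit Arguments. Unset Strict Implicit. Unset Printing Implicit Defensive.
Import Order.TTheory GRing.Theory Num.Theory.
Local Open Scope ring_scope.

Lemma dom_nonsing {R : realFieldType} {n : nat} (d : 'I_n -> 'I_n -> R) (js : 'I_n -> 'I_n) :
  (forall i, d i (js i) < 0) ->
  (forall i i', i' != i -> 0 <= d i' (js i)) ->
  (forall i, \sum_(i' < n) d i' (js i) < 0) ->
  forall v : 'rV[R]_n, (forall j, \sum_(i < n) v ord0 i * d i j = 0) -> v = 0.
Proof.
move=> hneg hpos hsum v hv.
apply/rowP => i0; rewrite mxE; apply/eqP; apply: contraT => hi0.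
have [im _ him] := @eq_bigmax _ R _ 0 i0 predT (fun i => `|v ord0 i|) erefl
   (fun i _ => normr_ge0 _).
have hmax : forall i, `|v ord0 i| <= `|v ord0 im|.
  by move=> i; rewrite -him; apply: le_bigmax.
have vpos : 0 < `|v ord0 im|.
  by apply: lt_le_trans (hmax i0); rewrite normr_gt0.
pose j := js im.
have := hv j; rewrite (bigD1 im) //= => e.
have e2 : v ord0 im * d im j = - \sum_(i < n | i != im) v ord0 i * d i j.
  by apply/eqP; rewrite -addr_eq0 e.
have b1 : `|v ord0 im| * (- d im j) <= \sum_(i < n | i != im) `|v ord0 i| * d i j.
  have -> : `|v ord0 im| * (- d im j) = `|v ord0 im * d im j|.
    by rewrite normrM (ltr0_norm (hneg im)).
  rewrite e2 normrN; apply: le_trans (ler_norm_sum _ _ _) _.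
  apply: ler_sum => i hi; rewrite normrM (ger0_norm (hpos im i hi)) //.
have b2 : \sum_(i < n | i != im) `|v ord0 i| * d i j <=
    `|v ord0 im| * \sum_(i < n | i != im) d i j.
  rewrite mulr_sumr; apply: ler_sum => i hi.
  by rewrite ler_wpM2r // hpos.
have := hsum im; rewrite (bigD1 im) //= -/j => b3.
have b4 : `|v ord0 im| * \sum_(i < n | i != im) d i j < `|v ord0 im| * (- d im j).
  by rewrite ltr_pM2l //; lra.
lra.
Qed.

Set Implicit Arguments. Unset Strict Implicit. Unset Printing Implicit Defensive.
Import Order.TTheory GRing.Theory Num.Theory.
Import numFieldNormedType.Exports.
Local Open Scope classical_set_scope.
Local Open Scope ring_scope.

Section Wr.
Context {R : realType}.

Definition wr (u : R) := if 0 < u then u else u + 2 * pi.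

Lemma sl_wr (K : R -> \bar R) (u : R) : inwin u ->
  sl K u = derive1 (kk K) (wr u) /\ 0 < wr u < 2 * pi.
Proof.
rewrite /sl /wr; case=> hu.
  by rewrite hu; move: (hu) => /andP[h1 h2]; rewrite h1; split.
have -> : (0 < u < 2 * pi) = false.
  by apply/negbTE; move: hu => /andP[h1 h2]; apply/negP => /andP[h3 h4]; lra.
rewrite hu; move: hu => /andP[h1 h2].
have -> : (0 < u) = false by apply/negbTE; rewrite -leNgt ltW.
by split => //; apply/andP; split; lra.
Qed.

Lemma sl_le (K : R -> \bar R) : C2_strictly_concave K -> forall u v : R,
  inwin u -> inwin v -> wr u <= wr v -> sl K v <= sl K u.
Proof.
move=> hC u v hu hv huv.
have [e1 /andP[a1 a2]] := sl_wr K hu.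
have [e2 /andP[b1 b2]] := sl_wr K hv.
by rewrite e1 e2; apply: kd_le.
Qed.

Lemma sl_lt (K : R -> \bar R) : C2_strictly_concave K -> forall u v : R,
  inwin u -> inwin v -> wr u < wr v -> sl K v < sl K u.
Proof.
move=> hC u v hu hv huv.
have [e1 /andP[a1 a2]] := sl_wr K hu.
have [e2 /andP[b1 b2]] := sl_wr K hv.
by rewrite e1 e2; apply: kd_dec.
Qed.

Lemma wr_pos (u : R) : 0 < u -> wr u = u.
Proof. by rewrite /wr => ->. Qed.

Lemma wr_neg (u : R) : u < 0 -> wr u = u + 2 * pi.
Proof. by move=> h; rewrite /wr ltNge ltW. Qed.

End Wr.

Lemma mulmx_cont {R : realType} {n : nat} (A : 'M[R]_n) :
  continuous (mulmxr A : 'rV[R]_n -> 'rV[R]_n).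
Proof.
move=> x; apply: differentiable_continuous.
have -> : (mulmxr A : 'rV[R]_n -> 'rV[R]_n) = \sum_(j < n) (fun h : 'rV[R]_n => h ord0 j *: row j A).
  apply/funext => h; rewrite fct_sumE /= mulmx_sum_row.
  by apply: eq_bigr => j _; rewrite (ord1 (0 : 'I_1)).
apply: differentiable_sum => j; apply: differentiableZl.
exact: differentiable_coord.
Qed.

Lemma mxnorm_le {R : realType} {n : nat} (v : 'rV[R]_n) (c : R) :
  0 <= c -> (forall i, `|v ord0 i| <= c) -> `|v| <= c.
Proof.
move=> c0 hv; rewrite [`|v|]/Num.norm /= mx_normrE.
apply: bigmax_le => // [[i j]] _ /=; rewrite (ord1 i); exact: hv.
Qed.

Section Final.
Context {R : realType} {n : nat} (K : 'I_n.+1 -> R -> \bar R) (s : 'S_n).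
Hypothesis hK : forall j, torus_kernel (K j).
Hypothesis hC : forall j, C2_strictly_concave (K j).
Variables (y : 'rV[R]_n) (zf : nat -> R).
Hypothesis hy : in_simplex s y.
Hypothesis hz1 : forall k, (k <= n)%N -> ypos y (sext s k) < zf k.
Hypothesis hz2 : forall k, (k <= n)%N -> zf k < ypos y (sext s k.+1).

Definition Gm k j := gz K y (zf k) j.
Definition Amat : 'M[R]_n := \matrix_(j, i) (Gm i.+1 j - Gm i j).

Lemma zf_lt a b : (a < b)%N -> (b <= n)%N -> zf a < zf b.
Proof.
move=> ab bn.
have an : (a <= n)%N by apply: leq_trans (ltnW ab) bn.
apply: lt_trans (hz2 an) _; apply: le_lt_trans (hz1 bn).
by apply: sim_le => //; apply: leq_trans bn _.
Qed.

Lemma zf_range k : (k <= n)%N -> 0 < zf k < 2 * pi.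
Proof. by move=> hk; apply: (int_pos hy hk (hz1 hk) (hz2 hk)). Qed.

Lemma u_pos k (j : 'I_n) : ((s^-1 j)%g.+1 <= k)%N -> (k <= n)%N ->
  0 < zf k - y ord0 j < 2 * pi.
Proof. by move=> hp hk; have [h _] := int_term hy j hk (hz1 hk) (hz2 hk); apply: h. Qed.

Lemma u_neg k (j : 'I_n) : (k < (s^-1 j)%g.+1)%N -> (k <= n)%N ->
  - (2 * pi) < zf k - y ord0 j < 0.
Proof. by move=> hp hk; have [_ h] := int_term hy j hk (hz1 hk) (hz2 hk); apply: h. Qed.

Lemma Gm_diff a b j : Gm a j - Gm b j =
  sl (K (lift ord0 j)) (zf b - y ord0 j) - sl (K (lift ord0 j)) (zf a - y ord0 j).
Proof. rewrite /Gm /gz /slz; ring. Qed.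

Lemma sign_a (i : 'I_n) : Gm i.+1 (s i) - Gm i (s i) < 0.
Proof.
set j := s i.
have hp : (s^-1 j)%g = i by rewrite /j permK.
have hi1 : (i.+1 <= n)%N by apply: ltn_ord.
have hi : (i <= n)%N by apply: ltnW.
have p1 : ((s^-1 j)%g.+1 <= i.+1)%N by rewrite hp.
have p2 : (i < (s^-1 j)%g.+1)%N by rewrite hp.
have /andP[a1 a2] := u_pos p1 hi1.
have /andP[b1 b2] := u_neg p2 hi.
rewrite Gm_diff subr_lt0.
apply: (sl_lt (hC _)); [by left; apply/andP|by right; apply/andP|].
rewrite wr_pos // wr_neg //.
have /andP[c1 c2] := zf_range hi1; have /andP[d1 d2] := zf_range hi.
lra.
Qed.

Lemma sign_b (i i' : 'I_n) : i' != i -> 0 <= Gm i'.+1 (s i) - Gm i' (s i).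
Proof.
move=> hne; set j := s i.
have hp : (s^-1 j)%g = i by rewrite /j permK.
have hi1 : (i'.+1 <= n)%N by apply: ltn_ord.
have hi : (i' <= n)%N by apply: ltnW.
have hz : zf i' < zf i'.+1 by apply: zf_lt.
rewrite Gm_diff subr_ge0.
case: (ltngtP i' i) => h; last by move: hne => /eqP; case; apply: val_inj.
- have p1 : (i'.+1 < (s^-1 j)%g.+1)%N by rewrite hp ltnS.
  have p2 : (i' < (s^-1 j)%g.+1)%N by rewrite hp ltnS ltnW.
  have /andP[a1 a2] := u_neg p1 hi1.
  have /andP[b1 b2] := u_neg p2 hi.
  apply: (sl_le (hC _)); [by right; apply/andP|by right; apply/andP|].
  rewrite !wr_neg //; lra.
- have p1 : ((s^-1 j)%g.+1 <= i'.+1)%N by rewrite hp ltnS ltnW.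
  have p2 : ((s^-1 j)%g.+1 <= i')%N by rewrite hp.
  have /andP[a1 a2] := u_pos p1 hi1.
  have /andP[b1 b2] := u_pos p2 hi.
  apply: (sl_le (hC _)); [by left; apply/andP|by left; apply/andP|].
  rewrite !wr_pos //; lra.
Qed.

Lemma sign_c (i : 'I_n) : \sum_(i' < n) (Gm i'.+1 (s i) - Gm i' (s i)) < 0.
Proof.
set j := s i.
rewrite -(big_mkord xpredT (fun i' => Gm i'.+1 j - Gm i' j)) telescope_sumr //.
have hp : (s^-1 j)%g = i by rewrite /j permK.
have p1 : ((s^-1 j)%g.+1 <= n)%N by rewrite hp ltn_ord.
have p2 : (0 < (s^-1 j)%g.+1)%N by rewrite hp.
have /andP[a1 a2] := u_pos p1 (leqnn n).
have /andP[b1 b2] := u_neg p2 (leq0n n).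
rewrite Gm_diff subr_lt0.
apply: (sl_lt (hC _)); [by left; apply/andP|by right; apply/andP|].
rewrite wr_pos // wr_neg //.
have /andP[c1 c2] := zf_range (leqnn n); have /andP[d1 d2] := zf_range (leq0n n).
lra.
Qed.

Lemma Amat_unit : Amat \in unitmx.
Proof.
rewrite unitmxE unitfE -det_tr; apply/det0P => -[v vn0 hv].
move/eqP: vn0; apply.
apply: (dom_nonsing (d := fun i j => Gm i.+1 j - Gm i j) (js := s)).
- exact: sign_a.
- exact: sign_b.
- exact: sign_c.
- move=> j; have := congr1 (fun M : 'rV[R]_n => M ord0 j) hv.
  by rewrite !mxE /=; under eq_bigr do rewrite !mxE.
Qed.


Hypothesis hF : forall k, (k <= n)%N -> Fsum K y (zf k) = msupE K s y k.
Hypothesis hU : forall k, (k <= n)%N -> forall t, Ileft s y k <= t <= Iright s y k ->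
  Fsum K y t = msupE K s y k -> t = zf k.

Lemma est k : (k <= n)%N -> forall eps : R, 0 < eps ->
  \forall h \near (0 : 'rV[R]_n),
  `|fine (msupE K s (y + h) k) - fine (msupE K s y k) - \sum_(j < n) Gm k j * h ord0 j|
    <= eps * `|h|.
Proof.
move=> hk eps e0.
rewrite -(hF hk) (Fsum_z hK hy hk (hz1 hk) (hz2 hk)) /=.
exact: (danskin hK hC hy hk (hz1 hk) (hz2 hk) (hF hk) (hU hk) e0).
Qed.

Lemma expansion (eps : R) : 0 < eps -> \forall h \near (0 : 'rV[R]_n),
  `|Delta K s (y + h) - Delta K s y - h *m Amat| <= eps * `|h|.
Proof.
move=> e0.
have e2 : 0 < eps / 2 by rewrite divr_gt0.
have N : forall k : 'I_n.+1, \forall h \near (0 : 'rV[R]_n),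
  `|fine (msupE K s (y + h) k) - fine (msupE K s y k) - \sum_(j < n) Gm k j * h ord0 j|
    <= eps / 2 * `|h|.
  by move=> k; apply: est => //; rewrite -ltnS.
have NN := filter_forall (nbhs_filter (0 : 'rV[R]_n)) N.
near=> h.
have H : forall k : 'I_n.+1,
  `|fine (msupE K s (y + h) k) - fine (msupE K s y k) - \sum_(j < n) Gm k j * h ord0 j|
    <= eps / 2 * `|h| by near: h; exact: NN.
apply: mxnorm_le => [|i]; first by rewrite mulr_ge0 // ltW.
have H1 := H (lift ord0 i); rewrite lift0 in H1.
have H0 := H (widen_ord (leqnSn n) i); rewrite /= in H0.
rewrite !mxE.
have -> : \sum_(j < n) h ord0 j * Amat j i =
    \sum_(j < n) Gm i.+1 j * h ord0 j - \sum_(j < n) Gm i j * h ord0 j.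
  rewrite -sumrB; apply: eq_bigr => j _; rewrite mxE; ring.
set a := fine (msupE K s (y + h) i.+1) - fine (msupE K s y i.+1) -
   \sum_(j < n) Gm i.+1 j * h ord0 j in H1.
set b := fine (msupE K s (y + h) i) - fine (msupE K s y i) -
   \sum_(j < n) Gm i j * h ord0 j in H0.
have -> : fine (msupE K s (y + h) i.+1) - fine (msupE K s (y + h) i) -
    (fine (msupE K s y i.+1) - fine (msupE K s y i)) -
    (\sum_(j < n) Gm i.+1 j * h ord0 j - \sum_(j < n) Gm i j * h ord0 j) = a - b.
  by rewrite /a /b; ring.
apply: le_trans (ler_normB _ _) _.
have -> : eps * `|h| = eps / 2 * `|h| + eps / 2 * `|h| by field.
exact: lerD.
Unshelve. all: by end_near. Qed.


Lemma Hexp : (Delta K s) \o shift y = cst (Delta K s y) + (mulmxr Amat) +o_ (0 : 'rV[R]_n) id.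
Proof.
apply/eqaddoP => e e0.
apply: filterS (expansion e0) => h H /=.
have -> : (Delta K s \o +%R^~ y - (cst (Delta K s y) + mulmxr Amat)) h =
    Delta K s (y + h) - Delta K s y - h *m Amat.
  by rewrite !fctE /= [h + y]addrC opprD addrA.
exact: H.
Qed.

Lemma final_main : differentiable (Delta K s) y /\ 'J (Delta K s) y \in unitmx.
Proof.
have dfe := diff_unique (@mulmx_cont _ _ Amat) Hexp.
have dD : differentiable (Delta K s) y.
  by apply/diff_locallyP; rewrite dfe; split; [exact: (@mulmx_cont _ _ Amat)|exact: Hexp].
split => //.
have -> : 'J (Delta K s) y = Amat.
  rewrite /jacobian dfe; apply/matrixP => i j.
  by rewrite /lin1_mx mxE /= -rowE mxE.
exact: Amat_unit.
Qed.

End Final.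

Import Order.TTheory GRing.Theory Num.Theory.
Import numFieldNormedType.Exports.
Local Open Scope classical_set_scope.
Local Open Scope ring_scope.

Theorem proposition9p2 (R : realType) (n : nat)
    (K : 'I_n.+1 -> R -> \bar R) (s : 'S_n) (y : 'rV[R]_n) :
  (forall j, torus_kernel (K j)) ->
  (forall j, C2_strictly_concave (K j)) ->
  in_simplex s y ->
  (forall k, (k <= n)%N ->
     exists z, Ileft s y k < z < Iright s y k /\
       Fsum K y z = msupE K s y k /\
       (forall t, Ileft s y k <= t <= Iright s y k ->
          Fsum K y t = msupE K s y k -> t = z)) ->
  differentiable (Delta K s) y /\ 'J (Delta K s) y \in unitmx.
Proof.
move=> hK hC hy hz.
have : forall k : nat, exists z : R, (k <= n)%N ->
   (Ileft s y k < z < Iright s y k /\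
       Fsum K y z = msupE K s y k /\
       (forall t, Ileft s y k <= t <= Iright s y k ->
          Fsum K y t = msupE K s y k -> t = z)).
  move=> k; case: (leqP k n) => hk.
    by have [z Hz] := hz k hk; exists z.
  by exists 0.
case/choice => zf hzf.
apply: (final_main hK hC (zf := zf) hy).
- by move=> k hk; have [/andP[a _] _] := hzf k hk.
- by move=> k hk; have [/andP[_ a] _] := hzf k hk.
- by move=> k hk; have [_ [a _]] := hzf k hk.
- by move=> k hk; have [_ [_ a]] := hzf k hk.
Qed.
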